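(* Let $(A,B)$ be an imprecise copula and define sequences by $A^0=A$, $B^0=B$ and, for $n\ge0$, $B^{n+1}=(A^n)_M$, $A^{n+1}=(B^{n+1})_O$. Then: (a) $(A^n)$ is pointwise nondecreasing, $(B^n)$ is pointwise nonincreasing, and both converge uniformly on $[0,1]^2$; denote the limits $\breve A$ and $\breve B$. (b) For each $n\ge1$, $(A^n,B^n)$ is an imprecise copula with $A^{n-1}\le A^n\le B^n\le B^{n-1}$. (c) $(\breve A,\breve B)$ is an imprecise copula with $A^n\le\breve A\le\breve B\le B^n$ for all $n$, and $(\breve A)_M=\breve B$, $(\breve B)_O=\breve A$.
   Context: Quasi-copula: $Q:[0,1]^2\to\mathbb{R}$ grounded ($Q(x,0)=Q(0,y)=0$), with neutral element $1$ ($Q(x,1)=x,Q(1,y)=y$), with $V_Q(R)\ge0$ for each rectangle having a side on the boundary of $[0,1]^2$, where $V_Q([s_1,s_2]\times[t_1,t_2])=Q(s_1,t_1)+Q(s_2,t_2)-Q(s_2,t_1)-Q(s_1,t_2)$. Defects: $\mathcal{R}_\nearrow(\mathbf{x}),\mathcal{R}_\swarrow(\mathbf{x}),\mathcal{R}_\nwarrow(\mathbf{x}),\mathcal{R}_\searrow(\mathbf{x})$ are the sets of (possibly degenerate) rectangles in $[0,1]^2$ with $\mathbf{x}$ as southwest, northeast, southeast, northwest corner; $D^Q_\bullet(\mathbf{x})=\inf\{V_Q(R):R\in\mathcal{R}_\bullet(\mathbf{x})\}$; $D^Q_M=\min(D^Q_\nearrow,D^Q_\swarrow)$, $D^Q_O=\min(D^Q_\nwarrow,D^Q_\searrow)$;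 $Q_M=Q-D^Q_M$, $Q_O=Q+D^Q_O$. Imprecise copula: a pair $(A,B)$ of grounded functions with neutral element 1 satisfying, for all rectangles with SW, SE, NE, NW corners $\mathbf{a},\mathbf{b},\mathbf{c},\mathbf{d}$: $A(\mathbf{a})+B(\mathbf{c})-A(\mathbf{b})-A(\mathbf{d})\ge0$, $B(\mathbf{a})+A(\mathbf{c})-A(\mathbf{b})-A(\mathbf{d})\ge0$, $B(\mathbf{a})+B(\mathbf{c})-B(\mathbf{b})-A(\mathbf{d})\ge0$, $B(\mathbf{a})+B(\mathbf{c})-A(\mathbf{b})-B(\mathbf{d})\ge0$. *)

(* Defs.v *)
From Stdlib Require Import Reals Lra ClassicalEpsilon.
Open Scope R_scope.

(* Functions on the unit square are modelled as R -> R -> R; only their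
   values on [0,1]^2 matter. *)
Definition fn2 := R -> R -> R.

Definition I01 (x : R) : Prop := 0 <= x <= 1.

Definition V (Q : fn2) (s1 s2 t1 t2 : R) : R :=
  Q s1 t1 + Q s2 t2 - Q s2 t1 - Q s1 t2.

Definition grounded (Q : fn2) : Prop :=
  forall x, I01 x -> Q x 0 = 0 /\ Q 0 x = 0.

Definition neutral1 (Q : fn2) : Prop :=
  forall x, I01 x -> Q x 1 = x /\ Q 1 x = x.

Definition is_glb (E : R -> Prop) (m : R) : Prop :=
  (forall y, E y -> m <= y) /\ (forall b, (forall y, E y -> b <= y) -> b <= m).

(* Infimum (chosen by classical choice; arbitrary (0) if it does not exist). *)
Definition Rinf (E : R -> Prop) : R :=
  epsilon (inhabits 0) (fun m => is_glb E m).

(* (x1,x2) south-west corner *)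
Definition D_NE (Q : fn2) (x1 x2 : R) : R :=
  Rinf (fun v => exists s2 t2, x1 <= s2 <= 1 /\ x2 <= t2 <= 1 /\
                               v = V Q x1 s2 x2 t2).
(* (x1,x2) north-east corner *)
Definition D_SW (Q : fn2) (x1 x2 : R) : R :=
  Rinf (fun v => exists s1 t1, 0 <= s1 <= x1 /\ 0 <= t1 <= x2 /\
                               v = V Q s1 x1 t1 x2).
(* (x1,x2) south-east corner *)
Definition D_NW (Q : fn2) (x1 x2 : R) : R :=
  Rinf (fun v => exists s1 t2, 0 <= s1 <= x1 /\ x2 <= t2 <= 1 /\
                               v = V Q s1 x1 x2 t2).
(* (x1,x2) north-west corner *)
Definition D_SE (Q : fn2) (x1 x2 : R) : R :=
  Rinf (fun v => exists s2 t1, x1 <= s2 <= 1 /\ 0 <= t1 <= x2 /\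
                               v = V Q x1 s2 t1 x2).

Definition D_M (Q : fn2) (x1 x2 : R) : R := Rmin (D_NE Q x1 x2) (D_SW Q x1 x2).
Definition D_O (Q : fn2) (x1 x2 : R) : R := Rmin (D_NW Q x1 x2) (D_SE Q x1 x2).

Definition QM (Q : fn2) : fn2 := fun x y => Q x y - D_M Q x y.
Definition QO (Q : fn2) : fn2 := fun x y => Q x y + D_O Q x y.

Definition imprecise_copula (A B : fn2) : Prop :=
  grounded A /\ grounded B /\ neutral1 A /\ neutral1 B /\
  forall s1 s2 t1 t2, 0 <= s1 -> s1 <= s2 -> s2 <= 1 ->
                      0 <= t1 -> t1 <= t2 -> t2 <= 1 ->
    A s1 t1 + B s2 t2 - A s2 t1 - A s1 t2 >= 0 /\
    B s1 t1 + A s2 t2 - A s2 t1 - A s1 t2 >= 0 /\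
    B s1 t1 + B s2 t2 - B s2 t1 - A s1 t2 >= 0 /\
    B s1 t1 + B s2 t2 - A s2 t1 - B s1 t2 >= 0.

Fixpoint seqAB (A B : fn2) (n : nat) : fn2 * fn2 :=
  match n with
  | O => (A, B)
  | S m => let Bn := QM (fst (seqAB A B m)) in (QO Bn, Bn)
  end.

Definition An (A B : fn2) (n : nat) : fn2 := fst (seqAB A B n).
Definition Bn (A B : fn2) (n : nat) : fn2 := snd (seqAB A B n).

Definition le_sq (F G : fn2) : Prop :=
  forall x y, I01 x -> I01 y -> F x y <= G x y.

Definition eq_sq (F G : fn2) : Prop :=
  forall x y, I01 x -> I01 y -> F x y = G x y.

Definition unif_cv (F : nat -> fn2) (L : fn2) : Prop :=
  forall eps, eps > 0 -> exists N, forall n, (n >= N)%nat ->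
    forall x y, I01 x -> I01 y -> Rabs (F n x y - L x y) < eps.

(* Main.v *)
Require Import Defs.
From Stdlib Require Import Reals Lra Lia ClassicalEpsilon Classical.
Open Scope R_scope.


Lemma Rinf_glb (E : R -> Prop) : (exists v, E v) -> (exists b, forall v, E v -> b <= v) -> is_glb E (Rinf E).
Proof.
  intros [v0 Hv0] [b Hb].
  assert (Hc : bound (fun u => E (-u))).
  { exists (-b). intros u Hu. specialize (Hb _ Hu). lra. }
  assert (Hn : exists u, E (-u)). { exists (-v0). rewrite Ropp_involutive. exact Hv0. }
  destruct (completeness _ Hc Hn) as [m [Hm1 Hm2]].
  unfold Rinf. apply epsilon_spec. exists (-m). split.
  - intros y Hy. assert (-y <= m). { apply Hm1. rewrite Ropp_involutive. exact Hy. } lra.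
  - intros c Hc'. assert (m <= -c). { apply Hm2. intros u Hu. specialize (Hc' _ Hu). lra. } lra.
Qed.

Definition bnd (Q : fn2) := forall x y, I01 x -> I01 y -> -1 <= Q x y <= 1.

Ltac bq HQ a b := let h := fresh in assert (h := HQ a b ltac:(unfold I01; lra) ltac:(unfold I01; lra)).

Lemma NE_glb Q x y : bnd Q -> I01 x -> I01 y ->
  is_glb (fun v => exists s2 t2, x <= s2 <= 1 /\ y <= t2 <= 1 /\ v = V Q x s2 y t2) (D_NE Q x y).
Proof.
  intros HQ Hx Hy. unfold I01 in *. apply Rinf_glb.
  - exists (V Q x x y y). exists x, y. repeat split; lra.
  - exists (-4). intros v (s2 & t2 & H1 & H2 & ->). unfold V.
    bq HQ x y. bq HQ s2 t2. bq HQ s2 y. bq HQ x t2. lra.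
Qed.
Lemma SW_glb Q x y : bnd Q -> I01 x -> I01 y ->
  is_glb (fun v => exists s1 t1, 0 <= s1 <= x /\ 0 <= t1 <= y /\ v = V Q s1 x t1 y) (D_SW Q x y).
Proof.
  intros HQ Hx Hy. unfold I01 in *. apply Rinf_glb.
  - exists (V Q x x y y). exists x, y. repeat split; lra.
  - exists (-4). intros v (s1 & t1 & H1 & H2 & ->). unfold V.
    bq HQ x y. bq HQ s1 t1. bq HQ s1 y. bq HQ x t1. lra.
Qed.
Lemma NW_glb Q x y : bnd Q -> I01 x -> I01 y ->
  is_glb (fun v => exists s1 t2, 0 <= s1 <= x /\ y <= t2 <= 1 /\ v = V Q s1 x y t2) (D_NW Q x y).
Proof.
  intros HQ Hx Hy. unfold I01 in *. apply Rinf_glb.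
  - exists (V Q x x y y). exists x, y. repeat split; lra.
  - exists (-4). intros v (s1 & t2 & H1 & H2 & ->). unfold V.
    bq HQ x y. bq HQ s1 t2. bq HQ s1 y. bq HQ x t2. lra.
Qed.
Lemma SE_glb Q x y : bnd Q -> I01 x -> I01 y ->
  is_glb (fun v => exists s2 t1, x <= s2 <= 1 /\ 0 <= t1 <= y /\ v = V Q x s2 t1 y) (D_SE Q x y).
Proof.
  intros HQ Hx Hy. unfold I01 in *. apply Rinf_glb.
  - exists (V Q x x y y). exists x, y. repeat split; lra.
  - exists (-4). intros v (s2 & t1 & H1 & H2 & ->). unfold V.
    bq HQ x y. bq HQ s2 t1. bq HQ s2 y. bq HQ x t1. lra.
Qed.

Lemma QM_ge_NE Q x y s2 t2 : bnd Q -> I01 x -> I01 y -> x <= s2 <= 1 -> y <= t2 <= 1 ->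
  Q x y - V Q x s2 y t2 <= QM Q x y.
Proof.
  intros HQ Hx Hy H1 H2. destruct (NE_glb Q x y HQ Hx Hy) as [L _].
  assert (D_NE Q x y <= V Q x s2 y t2) by (apply L; eauto).
  unfold QM, D_M. assert (Rmin (D_NE Q x y) (D_SW Q x y) <= D_NE Q x y) by apply Rmin_l. lra.
Qed.
Lemma QM_ge_SW Q x y s1 t1 : bnd Q -> I01 x -> I01 y -> 0 <= s1 <= x -> 0 <= t1 <= y ->
  Q x y - V Q s1 x t1 y <= QM Q x y.
Proof.
  intros HQ Hx Hy H1 H2. destruct (SW_glb Q x y HQ Hx Hy) as [L _].
  assert (D_SW Q x y <= V Q s1 x t1 y) by (apply L; eauto).
  unfold QM, D_M. assert (Rmin (D_NE Q x y) (D_SW Q x y) <= D_SW Q x y) by apply Rmin_r. lra.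
Qed.
Lemma QM_le Q x y T : bnd Q -> I01 x -> I01 y ->
  (forall s2 t2, x <= s2 <= 1 -> y <= t2 <= 1 -> Q x y - V Q x s2 y t2 <= T) ->
  (forall s1 t1, 0 <= s1 <= x -> 0 <= t1 <= y -> Q x y - V Q s1 x t1 y <= T) ->
  QM Q x y <= T.
Proof.
  intros HQ Hx Hy H1 H2. destruct (NE_glb Q x y HQ Hx Hy) as [_ G1].
  destruct (SW_glb Q x y HQ Hx Hy) as [_ G2].
  assert (Q x y - T <= D_NE Q x y).
  { apply G1. intros v (s2 & t2 & A1 & A2 & ->). specialize (H1 s2 t2 A1 A2). lra. }
  assert (Q x y - T <= D_SW Q x y).
  { apply G2. intros v (s1 & t1 & A1 & A2 & ->). specialize (H2 s1 t1 A1 A2). lra. }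
  unfold QM, D_M. unfold Rmin. destruct Rle_dec; lra.
Qed.
Lemma QO_le_NW Q x y s1 t2 : bnd Q -> I01 x -> I01 y -> 0 <= s1 <= x -> y <= t2 <= 1 ->
  QO Q x y <= Q x y + V Q s1 x y t2.
Proof.
  intros HQ Hx Hy H1 H2. destruct (NW_glb Q x y HQ Hx Hy) as [L _].
  assert (D_NW Q x y <= V Q s1 x y t2) by (apply L; eauto).
  unfold QO, D_O. assert (Rmin (D_NW Q x y) (D_SE Q x y) <= D_NW Q x y) by apply Rmin_l. lra.
Qed.
Lemma QO_le_SE Q x y s2 t1 : bnd Q -> I01 x -> I01 y -> x <= s2 <= 1 -> 0 <= t1 <= y ->
  QO Q x y <= Q x y + V Q x s2 t1 y.
Proof.
  intros HQ Hx Hy H1 H2. destruct (SE_glb Q x y HQ Hx Hy) as [L _].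
  assert (D_SE Q x y <= V Q x s2 t1 y) by (apply L; eauto).
  unfold QO, D_O. assert (Rmin (D_NW Q x y) (D_SE Q x y) <= D_SE Q x y) by apply Rmin_r. lra.
Qed.
Lemma QO_ge Q x y T : bnd Q -> I01 x -> I01 y ->
  (forall s1 t2, 0 <= s1 <= x -> y <= t2 <= 1 -> T <= Q x y + V Q s1 x y t2) ->
  (forall s2 t1, x <= s2 <= 1 -> 0 <= t1 <= y -> T <= Q x y + V Q x s2 t1 y) ->
  T <= QO Q x y.
Proof.
  intros HQ Hx Hy H1 H2. destruct (NW_glb Q x y HQ Hx Hy) as [_ G1].
  destruct (SE_glb Q x y HQ Hx Hy) as [_ G2].
  assert (T - Q x y <= D_NW Q x y).
  { apply G1. intros v (s1 & t2 & A1 & A2 & ->). specialize (H1 s1 t2 A1 A2). lra. }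
  assert (T - Q x y <= D_SE Q x y).
  { apply G2. intros v (s2 & t1 & A1 & A2 & ->). specialize (H2 s2 t1 A1 A2). lra. }
  unfold QO, D_O. unfold Rmin. destruct Rle_dec; lra.
Qed.


Ltac sc := first [unfold I01; lra | lra].
Ltac mne H A x y a b := pose proof (QM_ge_NE A x y a b H ltac:(sc) ltac:(sc) ltac:(sc) ltac:(sc)).
Ltac msw H A x y a b := pose proof (QM_ge_SW A x y a b H ltac:(sc) ltac:(sc) ltac:(sc) ltac:(sc)).
Ltac onw H A x y a b := pose proof (QO_le_NW A x y a b H ltac:(sc) ltac:(sc) ltac:(sc) ltac:(sc)).
Ltac ose H A x y a b := pose proof (QO_le_SE A x y a b H ltac:(sc) ltac:(sc) ltac:(sc) ltac:(sc)).


Lemma AM_C3 (s1 s2 t1 t2 : R) (h1 : 0 <= s1) (h2 : s1 <= s2) (h3 : s2 <= 1) (h4 : 0 <= t1) (h5 : t1 <= t2) (h6 : t2 <= 1) A : bnd A -> QM A s1 t1 + QM A s2 t2 - QM A s2 t1 - A s1 t2 >= 0.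
Proof.
  intro HA.
  assert (QM A s2 t1 <= QM A s1 t1 + QM A s2 t2 - A s1 t2); [|lra].
  apply QM_le; try assumption; try sc.
  - intros u v Hu Hv. destruct (Rle_dec t2 v).
    + mne HA A s1 t1 u t2. mne HA A s2 t2 u v. unfold V in *; lra.
    + mne HA A s1 t1 u v. msw HA A s2 t2 s1 v. unfold V in *; lra.
  - intros w z Hw Hz. destruct (Rle_dec w s1).
    + msw HA A s1 t1 w z. msw HA A s2 t2 s1 z. unfold V in *; lra.
    + mne HA A s1 t1 w t2. msw HA A s2 t2 w z. unfold V in *; lra.
Qed.

Lemma AM_C4 (s1 s2 t1 t2 : R) (h1 : 0 <= s1) (h2 : s1 <= s2) (h3 : s2 <= 1) (h4 : 0 <= t1) (h5 : t1 <= t2) (h6 : t2 <= 1) A : bnd A -> QM A s1 t1 + QM A s2 t2 - A s2 t1 - QM A s1 t2 >= 0.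
Proof.
  intro HA.
  assert (QM A s1 t2 <= QM A s1 t1 + QM A s2 t2 - A s2 t1); [|lra].
  apply QM_le; try assumption; try sc.
  - intros u v Hu Hv. destruct (Rle_dec s2 u).
    + mne HA A s1 t1 s2 v. mne HA A s2 t2 u v. unfold V in *; lra.
    + mne HA A s1 t1 u v. msw HA A s2 t2 u t1. unfold V in *; lra.
  - intros w z Hw Hz. destruct (Rle_dec z t1).
    + msw HA A s1 t1 w z. msw HA A s2 t2 w t1. unfold V in *; lra.
    + mne HA A s1 t1 s2 z. msw HA A s2 t2 w z. unfold V in *; lra.
Qed.

Lemma BO_C1 (s1 s2 t1 t2 : R) (h1 : 0 <= s1) (h2 : s1 <= s2) (h3 : s2 <= 1) (h4 : 0 <= t1) (h5 : t1 <= t2) (h6 : t2 <= 1) B : bnd B -> QO B s1 t1 + B s2 t2 - QO B s2 t1 - QO B s1 t2 >= 0.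
Proof.
  intro HB.
  assert (QO B s2 t1 + QO B s1 t2 - B s2 t2 <= QO B s1 t1); [|lra].
  apply QO_ge; try assumption; try sc.
  - intros w z Hw Hz. destruct (Rle_dec t2 z).
    + onw HB B s1 t2 w z. onw HB B s2 t1 w t2. unfold V in *; lra.
    + onw HB B s2 t1 w z. ose HB B s1 t2 s2 z. unfold V in *; lra.
  - intros u v Hu Hv. destruct (Rle_dec s2 u).
    + ose HB B s2 t1 u v. ose HB B s1 t2 s2 v. unfold V in *; lra.
    + ose HB B s1 t2 u v. onw HB B s2 t1 u t2. unfold V in *; lra.
Qed.

Lemma BO_C2 (s1 s2 t1 t2 : R) (h1 : 0 <= s1) (h2 : s1 <= s2) (h3 : s2 <= 1) (h4 : 0 <= t1) (h5 : t1 <= t2) (h6 : t2 <= 1) B : bnd B -> B s1 t1 + QO B s2 t2 - QO B s2 t1 - QO B s1 t2 >= 0.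
Proof.
  intro HB.
  assert (QO B s2 t1 + QO B s1 t2 - B s1 t1 <= QO B s2 t2); [|lra].
  apply QO_ge; try assumption; try sc.
  - intros w z Hw Hz. destruct (Rle_dec w s1).
    + onw HB B s1 t2 w z. onw HB B s2 t1 s1 z. unfold V in *; lra.
    + ose HB B s1 t2 w t1. onw HB B s2 t1 w z. unfold V in *; lra.
  - intros u v Hu Hv. destruct (Rle_dec v t1).
    + ose HB B s2 t1 u v. ose HB B s1 t2 u t1. unfold V in *; lra.
    + onw HB B s2 t1 s1 v. ose HB B s1 t2 u v. unfold V in *; lra.
Qed.


Definition qc (Q : fn2) := grounded Q /\ neutral1 Q /\
  forall s1 s2 t1 t2, 0 <= s1 -> s1 <= s2 -> s2 <= 1 -> 0 <= t1 -> t1 <= t2 -> t2 <= 1 ->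
    (s1 = 0 \/ s2 = 1 \/ t1 = 0 \/ t2 = 1) -> V Q s1 s2 t1 t2 >= 0.

Ltac gr H a := let h := fresh in assert (h := H a ltac:(sc)); destruct h.

Lemma ic_facts A B : imprecise_copula A B -> bnd A /\ bnd B /\ qc A /\ qc B /\ le_sq A B.
Proof.
  intros (gA & gB & nA & nB & H).
  assert (LE : le_sq A B).
  { intros x y Hx Hy. unfold I01 in *. destruct (H x x y y) as (c1 & _); lra. }
  assert (A0 : forall x y, I01 x -> I01 y -> 0 <= A x y).
  { intros x y Hx Hy. unfold I01 in *. destruct (H 0 x 0 y) as (_ & c2 & _); try lra.
    gr gA x. gr gA y. gr gB 0. lra. }
  assert (B1 : forall x y, I01 x -> I01 y -> B x y <= 1).
  { intros x y Hx Hy. unfold I01 in *. destruct (H 0 x y 1) as (_ & _ & c3 & _); try lra.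
    gr gB y. gr nB x. gr gA 1. lra. }
  split; [|split; [|split; [|split]]].
  - intros x y Hx Hy. pose proof (A0 x y Hx Hy). pose proof (B1 x y Hx Hy). pose proof (LE x y Hx Hy). lra.
  - intros x y Hx Hy. pose proof (A0 x y Hx Hy). pose proof (B1 x y Hx Hy). pose proof (LE x y Hx Hy). lra.
  - split; [exact gA|split; [exact nA|]].
    intros s1 s2 t1 t2 h1 h2 h3 h4 h5 h6 Hb. unfold V.
    destruct (H s1 s2 t1 t2) as (c1 & c2 & c3 & c4); try lra.
    destruct Hb as [ -> | [ -> | [ -> | -> ] ] ].
    + gr gA t1. gr gB t1. gr gA t2. lra.
    + gr nA t1. gr nB t2. gr nA t2. lra.
    + gr gA s1. gr gB s1. gr gA s2. lra.
    + gr nA s2. gr nB s2. gr nA s1. lra.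
  - split; [exact gB|split; [exact nB|]].
    intros s1 s2 t1 t2 h1 h2 h3 h4 h5 h6 Hb. unfold V.
    destruct (H s1 s2 t1 t2) as (c1 & c2 & c3 & c4); try lra.
    destruct Hb as [ -> | [ -> | [ -> | -> ] ] ].
    + gr gA t2. gr gB t2. lra.
    + gr nA t1. gr nB t1. lra.
    + gr gA s2. gr gB s2. lra.
    + gr nA s1. gr nB s1. lra.
  - exact LE.
Qed.

Lemma QM_bd Q x y : qc Q -> bnd Q -> I01 x -> I01 y -> (x = 0 \/ x = 1 \/ y = 0 \/ y = 1) ->
  QM Q x y = Q x y.
Proof.
  intros (_ & _ & Hq) HQ Hx Hy Hb. unfold I01 in *.
  mne HQ Q x y x y. unfold V in H.
  assert (QM Q x y <= Q x y); [|lra].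
  apply QM_le; try assumption; try sc.
  - intros s2 t2 A1 A2. assert (V Q x s2 y t2 >= 0); [|lra].
    apply Hq; try lra; destruct Hb as [ -> | [ -> | [ -> | -> ] ] ]; lra.
  - intros s1 t1 A1 A2. assert (V Q s1 x t1 y >= 0); [|lra].
    apply Hq; try lra; destruct Hb as [ -> | [ -> | [ -> | -> ] ] ]; lra.
Qed.

Lemma QO_bd Q x y : qc Q -> bnd Q -> I01 x -> I01 y -> (x = 0 \/ x = 1 \/ y = 0 \/ y = 1) ->
  QO Q x y = Q x y.
Proof.
  intros (_ & _ & Hq) HQ Hx Hy Hb. unfold I01 in *.
  onw HQ Q x y x y. unfold V in H.
  assert (Q x y <= QO Q x y); [|lra].
  apply QO_ge; try assumption; try sc.
  - intros s1 t2 A1 A2. assert (V Q s1 x y t2 >= 0); [|lra].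
    apply Hq; try lra; destruct Hb as [ -> | [ -> | [ -> | -> ] ] ]; lra.
  - intros s2 t1 A1 A2. assert (V Q x s2 t1 y >= 0); [|lra].
    apply Hq; try lra; destruct Hb as [ -> | [ -> | [ -> | -> ] ] ]; lra.
Qed.

Lemma QM_gn Q : qc Q -> bnd Q -> grounded (QM Q) /\ neutral1 (QM Q).
Proof.
  intros Hq HQ. pose proof Hq as (g & n & _). split; intros x Hx; unfold I01 in Hx.
  - rewrite !QM_bd; try assumption; try sc. gr g x. auto.
  - rewrite !QM_bd; try assumption; try sc. gr n x. auto.
Qed.
Lemma QO_gn Q : qc Q -> bnd Q -> grounded (QO Q) /\ neutral1 (QO Q).
Proof.
  intros Hq HQ. pose proof Hq as (g & n & _). split; intros x Hx; unfold I01 in Hx.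
  - rewrite !QO_bd; try assumption; try sc. gr g x. auto.
  - rewrite !QO_bd; try assumption; try sc. gr n x. auto.
Qed.

Lemma step A B : imprecise_copula A B ->
  imprecise_copula (QO (QM A)) (QM A) /\ le_sq A (QO (QM A)) /\ le_sq (QM A) B.
Proof.
  intro IAB. pose proof IAB as (gA & gB & nA & nB & H).
  destruct (ic_facts _ _ IAB) as (bA & bB & qA & qB & _).
  destruct (QM_gn A qA bA) as [gM nM].
  assert (I1 : imprecise_copula A (QM A)).
  { split; [exact gA|split; [exact gM|split; [exact nA|split; [exact nM|]]]].
    intros s1 s2 t1 t2 h1 h2 h3 h4 h5 h6.
    split; [|split; [|split]].
    - msw bA A s2 t2 s1 t1. unfold V in *; lra.
    - mne bA A s1 t1 s2 t2. unfold V in *; lra.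
    - apply AM_C3; assumption.
    - apply AM_C4; assumption. }
  destruct (ic_facts _ _ I1) as (_ & bM & _ & qM & _).
  destruct (QO_gn _ qM bM) as [gO nO].
  pose proof I1 as (_ & _ & _ & _ & H1).
  split; [|split].
  - split; [exact gO|split; [exact gM|split; [exact nO|split; [exact nM|]]]].
    intros s1 s2 t1 t2 h1 h2 h3 h4 h5 h6.
    split; [|split; [|split]].
    + apply BO_C1; assumption.
    + apply BO_C2; assumption.
    + ose bM (QM A) s1 t2 s2 t1. unfold V in *; lra.
    + onw bM (QM A) s2 t1 s1 t2. unfold V in *; lra.
  - intros x y Hx Hy. unfold I01 in *. apply QO_ge; try assumption.
    + intros s1 t2 A1 A2. destruct (H1 s1 x y t2) as (_ & _ & _ & c4); try lra. unfold V; lra.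
    + intros s2 t1 A1 A2. destruct (H1 x s2 t1 y) as (_ & _ & c3 & _); try lra. unfold V; lra.
  - intros x y Hx Hy. unfold I01 in *. apply QM_le; try assumption.
    + intros s2 t2 A1 A2. destruct (H x s2 y t2) as (_ & c2 & _); try lra. unfold V; lra.
    + intros s1 t1 A1 A2. destruct (H s1 x t1 y) as (c1 & _); try lra. unfold V; lra.
Qed.


Definition lip (Q : fn2) := forall x y x' y', I01 x -> I01 y -> I01 x' -> I01 y' ->
  Q x y - Q x' y' <= Rabs (x - x') + Rabs (y - y').

Lemma qc_lip Q : qc Q -> lip Q.
Proof.
  intros (g & n & H) x y x' y' Hx Hy Hx' Hy'. unfold I01 in *.
  assert (Hxm : forall a b t, 0 <= a -> a <= b -> b <= 1 -> 0 <= t <= 1 ->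
            0 <= Q b t - Q a t <= b - a).
  { intros a b t h1 h2 h3 ht.
    assert (V Q a b 0 t >= 0) by (apply H; lra).
    assert (V Q a b t 1 >= 0) by (apply H; lra).
    unfold V in *. gr g a. gr g b. gr n a. gr n b. lra. }
  assert (Hym : forall a b t, 0 <= a -> a <= b -> b <= 1 -> 0 <= t <= 1 ->
            0 <= Q t b - Q t a <= b - a).
  { intros a b t h1 h2 h3 ht.
    assert (V Q 0 t a b >= 0) by (apply H; lra).
    assert (V Q t 1 a b >= 0) by (apply H; lra).
    unfold V in *. gr g a. gr g b. gr n a. gr n b. lra. }
  assert (E1 : Q x y - Q x' y <= Rabs (x - x')).
  { destruct (Rle_dec x x').
    - pose proof (Hxm x x' y ltac:(lra) ltac:(lra) ltac:(lra) ltac:(lra)).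
      pose proof (Rabs_pos (x - x')). lra.
    - pose proof (Hxm x' x y ltac:(lra) ltac:(lra) ltac:(lra) ltac:(lra)).
      rewrite Rabs_right by lra. lra. }
  assert (E2 : Q x' y - Q x' y' <= Rabs (y - y')).
  { destruct (Rle_dec y y').
    - pose proof (Hym y y' x' ltac:(lra) ltac:(lra) ltac:(lra) ltac:(lra)).
      pose proof (Rabs_pos (y - y')). lra.
    - pose proof (Hym y' y x' ltac:(lra) ltac:(lra) ltac:(lra) ltac:(lra)).
      rewrite Rabs_right by lra. lra. }
  lra.
Qed.

Lemma fin1 (m : nat) (Q : nat -> nat -> Prop) :
  (forall i, (i <= m)%nat -> exists N, forall n, (n >= N)%nat -> Q i n) ->
  exists N, forall i n, (i <= m)%nat -> (n >= N)%nat -> Q i n.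
Proof.
  induction m as [|m IH]; intros H.
  - destruct (H 0%nat ltac:(lia)) as [N HN]. exists N. intros i n Hi Hn.
    assert (i = 0%nat) by lia. subst. auto.
  - destruct IH as [N1 H1]. { intros i Hi. apply H. lia. }
    destruct (H (S m) ltac:(lia)) as [N2 H2].
    exists (Nat.max N1 N2). intros i n Hi Hn.
    destruct (Nat.eq_dec i (S m)) as [->|Hne].
    + apply H2. lia.
    + apply H1; lia.
Qed.

Lemma fin2 (m : nat) (P : nat -> nat -> nat -> Prop) :
  (forall i j, (i <= m)%nat -> (j <= m)%nat -> exists N, forall n, (n >= N)%nat -> P i j n) ->
  exists N, forall i j n, (i <= m)%nat -> (j <= m)%nat -> (n >= N)%nat -> P i j n.
Proof.
  intros H.
  destruct (fin1 m (fun i n => forall j, (j <= m)%nat -> P i j n)) as [N HN].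
  - intros i Hi. destruct (fin1 m (fun j n => P i j n)) as [N HN].
    + intros j Hj. apply H; assumption.
    + exists N. intros n Hn j Hj. apply HN; assumption.
  - exists N. intros i j n Hi Hj Hn. apply HN; assumption.
Qed.

Lemma grid (m : nat) x : (0 < m)%nat -> I01 x ->
  exists i, (i <= m)%nat /\ 0 <= x - INR i / INR m <= / INR m.
Proof.
  intros Hm Hx. unfold I01 in Hx.
  assert (Pm : 0 < INR m) by (apply lt_0_INR; lia).
  assert (Hj : forall j, (j <= m)%nat -> exists k, (k <= j)%nat /\ INR k / INR m <= x /\
            (k = j \/ ~ (INR (S k) / INR m <= x))).
  { induction j as [|j IH]; intros Hjm.
    - exists 0%nat. split; [lia|]. split; [|left; reflexivity]. simpl. unfold Rdiv. rewrite Rmult_0_l. lra.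
    - destruct (classic (INR (S j) / INR m <= x)) as [Hp|Hp].
      + exists (S j). split; [lia|]. split; [exact Hp|left; reflexivity].
      + destruct (IH ltac:(lia)) as (k & Hk1 & Hk2 & Hk3). exists k. split; [lia|]. split; [exact Hk2|].
        right. destruct Hk3 as [->|Hk3]; assumption. }
  destruct (Hj m ltac:(lia)) as (k & Hk1 & Hk2 & Hk3).
  exists k. split; [exact Hk1|]. split; [lra|].
  destruct Hk3 as [->|Hk3].
  - unfold Rdiv. rewrite Rinv_r by lra. pose proof (Rinv_0_lt_compat _ Pm). lra.
  - apply Rnot_le_lt in Hk3. rewrite S_INR in Hk3.
    unfold Rdiv in *. rewrite Rmult_plus_distr_r, Rmult_1_l in Hk3. lra.
Qed.

Lemma grid_in (m i : nat) : (0 < m)%nat -> (i <= m)%nat -> I01 (INR i / INR m).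
Proof.
  intros Hm Hi. assert (Pm : 0 < INR m) by (apply lt_0_INR; lia).
  assert (INR i <= INR m) by (apply le_INR; exact Hi).
  pose proof (pos_INR i). unfold I01. split.
  - unfold Rdiv. apply Rmult_le_pos; [lra|]. left; apply Rinv_0_lt_compat; lra.
  - apply Rmult_le_reg_r with (INR m); [lra|]. unfold Rdiv. rewrite Rmult_assoc, Rinv_l by lra. lra.
Qed.

Lemma unif_grid (F : nat -> fn2) L :
  (forall n, lip (F n)) -> lip L ->
  (forall x y, I01 x -> I01 y -> forall eps, eps > 0 -> exists N, forall n, (n >= N)%nat ->
      Rabs (F n x y - L x y) < eps) ->
  unif_cv F L.
Proof.
  intros HF HL Hp eps He.
  destruct (archimed_cor1 (eps / 5) ltac:(lra)) as (m & Hm1 & Hm2).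
  assert (Pm : 0 < INR m) by (apply lt_0_INR; lia).
  destruct (fin2 m (fun i j n => Rabs (F n (INR i / INR m) (INR j / INR m) - L (INR i / INR m) (INR j / INR m)) < eps / 5)) as [N HN].
  { intros i j Hi Hj. apply Hp; try apply grid_in; try assumption. lra. }
  exists N. intros n Hn x y Hx Hy.
  destruct (grid m x Hm2 Hx) as (i & Hi & Hxi).
  destruct (grid m y Hm2 Hy) as (j & Hj & Hyj).
  set (p := INR i / INR m) in *. set (q := INR j / INR m) in *.
  assert (Hp' : I01 p) by (apply grid_in; assumption).
  assert (Hq' : I01 q) by (apply grid_in; assumption).
  specialize (HN i j n Hi Hj Hn). fold p q in HN.
  apply Rabs_def2 in HN. destruct HN as [HN1 HN2].
  assert (R1 : Rabs (x - p) <= / INR m) by (apply Rabs_le; lra).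
  assert (R2 : Rabs (y - q) <= / INR m) by (apply Rabs_le; lra).
  assert (R3 : Rabs (p - x) <= / INR m) by (rewrite Rabs_minus_sym; exact R1).
  assert (R4 : Rabs (q - y) <= / INR m) by (rewrite Rabs_minus_sym; exact R2).
  pose proof (HF n x y p q Hx Hy Hp' Hq'). pose proof (HF n p q x y Hp' Hq' Hx Hy).
  pose proof (HL x y p q Hx Hy Hp' Hq'). pose proof (HL p q x y Hp' Hq' Hx Hy).
  apply Rabs_def1; lra.
Qed.

Definition Asup (F : nat -> fn2) : fn2 := fun x y => - Rinf (fun v => exists n, v = - F n x y).
Definition Binf (F : nat -> fn2) : fn2 := fun x y => Rinf (fun v => exists n, v = F n x y).

Lemma Asup_glb F x y : (forall n, bnd (F n)) -> I01 x -> I01 y ->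
  is_glb (fun v => exists n, v = - F n x y) (- Asup F x y).
Proof.
  intros HF Hx Hy. unfold Asup. rewrite Ropp_involutive. apply Rinf_glb.
  - exists (- F 0%nat x y). exists 0%nat. reflexivity.
  - exists (-1). intros v [n ->]. pose proof (HF n x y Hx Hy). lra.
Qed.
Lemma Asup_ge F x y n : (forall n, bnd (F n)) -> I01 x -> I01 y -> F n x y <= Asup F x y.
Proof. intros HF Hx Hy. destruct (Asup_glb F x y HF Hx Hy) as [L _].
  assert (- Asup F x y <= - F n x y) by (apply L; exists n; reflexivity). lra. Qed.
Lemma Asup_le F x y c : (forall n, bnd (F n)) -> I01 x -> I01 y -> (forall n, F n x y <= c) -> Asup F x y <= c.
Proof. intros HF Hx Hy Hc. destruct (Asup_glb F x y HF Hx Hy) as [_ G].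
  assert (-c <= - Asup F x y); [|lra]. apply G. intros v [n ->]. specialize (Hc n). lra. Qed.

Lemma Binf_glb F x y : (forall n, bnd (F n)) -> I01 x -> I01 y ->
  is_glb (fun v => exists n, v = F n x y) (Binf F x y).
Proof.
  intros HF Hx Hy. unfold Binf. apply Rinf_glb.
  - exists (F 0%nat x y). exists 0%nat. reflexivity.
  - exists (-1). intros v [n ->]. pose proof (HF n x y Hx Hy). lra.
Qed.
Lemma Binf_le F x y n : (forall n, bnd (F n)) -> I01 x -> I01 y -> Binf F x y <= F n x y.
Proof. intros HF Hx Hy. destruct (Binf_glb F x y HF Hx Hy) as [L _]. apply L. exists n; reflexivity. Qed.
Lemma Binf_ge F x y c : (forall n, bnd (F n)) -> I01 x -> I01 y -> (forall n, c <= F n x y) -> c <= Binf F x y.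
Proof. intros HF Hx Hy Hc. destruct (Binf_glb F x y HF Hx Hy) as [_ G].
  apply G. intros v [n ->]. apply Hc. Qed.

Lemma mono_up (F : nat -> fn2) : (forall n, le_sq (F n) (F (S n))) ->
  forall n m, (n <= m)%nat -> le_sq (F n) (F m).
Proof.
  intros H n m Hnm. induction Hnm.
  - intros x y _ _. lra.
  - intros x y Hx Hy. specialize (IHHnm x y Hx Hy). specialize (H m x y Hx Hy). lra.
Qed.

Lemma Asup_cv F : (forall n, bnd (F n)) -> (forall n, le_sq (F n) (F (S n))) ->
  forall x y, I01 x -> I01 y -> forall eps, eps > 0 -> exists N, forall n, (n >= N)%nat ->
      Rabs (F n x y - Asup F x y) < eps.
Proof.
  intros HF Hm x y Hx Hy eps He.
  destruct (classic (exists N, Asup F x y - eps < F N x y)) as [[N HN]|Hn].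
  - exists N. intros n Hn. pose proof (mono_up F Hm N n Hn x y Hx Hy).
    pose proof (Asup_ge F x y n HF Hx Hy). apply Rabs_def1; lra.
  - exfalso. assert (Asup F x y <= Asup F x y - eps); [|lra].
    apply Asup_le; try assumption. intros n. apply Rnot_lt_le. intro Hc. apply Hn. exists n. exact Hc.
Qed.

Lemma mono_dn (F : nat -> fn2) : (forall n, le_sq (F (S n)) (F n)) ->
  forall n m, (n <= m)%nat -> le_sq (F m) (F n).
Proof.
  intros H n m Hnm. induction Hnm.
  - intros x y _ _. lra.
  - intros x y Hx Hy. specialize (IHHnm x y Hx Hy). specialize (H m x y Hx Hy). lra.
Qed.

Lemma Binf_cv F : (forall n, bnd (F n)) -> (forall n, le_sq (F (S n)) (F n)) ->
  forall x y, I01 x -> I01 y -> forall eps, eps > 0 -> exists N, forall n, (n >= N)%nat ->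
      Rabs (F n x y - Binf F x y) < eps.
Proof.
  intros HF Hm x y Hx Hy eps He.
  destruct (classic (exists N, F N x y < Binf F x y + eps)) as [[N HN]|Hn].
  - exists N. intros n Hn. pose proof (mono_dn F Hm N n Hn x y Hx Hy).
    pose proof (Binf_le F x y n HF Hx Hy). apply Rabs_def1; lra.
  - exfalso. assert (Binf F x y + eps <= Binf F x y); [|lra].
    apply Binf_ge; try assumption. intros n. apply Rnot_lt_le. intro Hc. apply Hn. exists n. exact Hc.
Qed.

Lemma Asup_lip F : (forall n, bnd (F n)) -> (forall n, lip (F n)) -> lip (Asup F).
Proof.
  intros HF HL x y x' y' Hx Hy Hx' Hy'.
  assert (Asup F x y <= Asup F x' y' + (Rabs (x - x') + Rabs (y - y'))); [|lra].
  apply Asup_le; try assumption. intro n. pose proof (HL n x y x' y' Hx Hy Hx' Hy').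
  pose proof (Asup_ge F x' y' n HF Hx' Hy'). lra.
Qed.
Lemma Binf_lip F : (forall n, bnd (F n)) -> (forall n, lip (F n)) -> lip (Binf F).
Proof.
  intros HF HL x y x' y' Hx Hy Hx' Hy'.
  assert (Binf F x y - (Rabs (x - x') + Rabs (y - y')) <= Binf F x' y'); [|lra].
  apply Binf_ge; try assumption. intro n. pose proof (HL n x y x' y' Hx Hy Hx' Hy').
  pose proof (Binf_le F x y n HF Hx Hy). lra.
Qed.


Lemma Rabs_le_i z e : Rabs z <= e -> -e <= z <= e.
Proof. unfold Rabs. destruct Rcase_abs; lra. Qed.

Lemma zero_of (z : R) : (forall e, e > 0 -> -e < z < e) -> z = 0.
Proof.
  intros H. destruct (Rtotal_order z 0) as [h|[h|h]]; auto.
  - specialize (H (-z) ltac:(lra)). lra.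
  - specialize (H z ltac:(lra)). lra.
Qed.
Lemma nonneg_of z : (forall e, e > 0 -> -e < z) -> z >= 0.
Proof.
  intros H. destruct (Rle_dec 0 z); [lra|]. specialize (H (-z) ltac:(lra)). lra.
Qed.

Lemma approx F L G M : unif_cv F L -> unif_cv G M -> forall e, e > 0 -> exists n,
  forall x y, I01 x -> I01 y -> Rabs (F n x y - L x y) < e /\ Rabs (G n x y - M x y) < e.
Proof.
  intros H1 H2 e He. destruct (H1 e He) as [N1 h1]. destruct (H2 e He) as [N2 h2].
  exists (Nat.max N1 N2). intros x y Hx Hy. split; [apply h1|apply h2]; auto; lia.
Qed.

Ltac ap Hn a b := let h1 := fresh in let h2 := fresh in
  destruct (Hn a b ltac:(sc) ltac:(sc)) as [h1 h2]; apply Rabs_def2 in h1; apply Rabs_def2 in h2.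

Lemma lim_ic F L G M : unif_cv F L -> unif_cv G M -> (forall n, imprecise_copula (F n) (G n)) ->
  imprecise_copula L M.
Proof.
  intros H1 H2 HI.
  split; [|split; [|split; [|split]]].
  - intros x Hx. unfold I01 in Hx. split; apply zero_of; intros e He; destruct (approx F L G M H1 H2 e He) as [n Hn];
    destruct (HI n) as (g & _ & _ & _ & _); gr g x; [ap Hn x 0|ap Hn 0 x]; lra.
  - intros x Hx. unfold I01 in Hx. split; apply zero_of; intros e He; destruct (approx F L G M H1 H2 e He) as [n Hn];
    destruct (HI n) as (_ & g & _ & _ & _); gr g x; [ap Hn x 0|ap Hn 0 x]; lra.
  - intros x Hx. unfold I01 in Hx. split; (assert (forall w : R, w - x = 0 -> w = x) as Hw by (intros; lra)); apply Hw;
    apply zero_of; intros e He; destruct (approx F L G M H1 H2 e He) as [n Hn];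
    destruct (HI n) as (_ & _ & g & _ & _); gr g x; [ap Hn x 1|ap Hn 1 x]; lra.
  - intros x Hx. unfold I01 in Hx. split; (assert (forall w : R, w - x = 0 -> w = x) as Hw by (intros; lra)); apply Hw;
    apply zero_of; intros e He; destruct (approx F L G M H1 H2 e He) as [n Hn];
    destruct (HI n) as (_ & _ & _ & g & _); gr g x; [ap Hn x 1|ap Hn 1 x]; lra.
  - intros s1 s2 t1 t2 h1 h2 h3 h4 h5 h6.
    split; [|split; [|split]]; apply nonneg_of; intros e He;
    destruct (approx F L G M H1 H2 (e/4) ltac:(lra)) as [n Hn];
    destruct (HI n) as (_ & _ & _ & _ & Hc);
    destruct (Hc s1 s2 t1 t2 h1 h2 h3 h4 h5 h6) as (c1 & c2 & c3 & c4);
    ap Hn s1 t1; ap Hn s2 t2; ap Hn s1 t2; ap Hn s2 t1; lra.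
Qed.

Lemma QM_cont P Q e : bnd P -> bnd Q -> (forall x y, I01 x -> I01 y -> Rabs (P x y - Q x y) <= e) ->
  forall x y, I01 x -> I01 y -> QM P x y <= QM Q x y + 5 * e.
Proof.
  intros HP HQ He x y Hx Hy. unfold I01 in *.
  pose proof (Rabs_le_i _ _ (He x y ltac:(sc) ltac:(sc))).
  apply QM_le; try assumption; try sc.
  - intros s2 t2 A1 A2. mne HQ Q x y s2 t2.
    pose proof (Rabs_le_i _ _ (He s2 t2 ltac:(sc) ltac:(sc))).
    pose proof (Rabs_le_i _ _ (He s2 y ltac:(sc) ltac:(sc))).
    pose proof (Rabs_le_i _ _ (He x t2 ltac:(sc) ltac:(sc))).
    unfold V in *. lra.
  - intros s1 t1 A1 A2. msw HQ Q x y s1 t1.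
    pose proof (Rabs_le_i _ _ (He s1 t1 ltac:(sc) ltac:(sc))).
    pose proof (Rabs_le_i _ _ (He s1 y ltac:(sc) ltac:(sc))).
    pose proof (Rabs_le_i _ _ (He x t1 ltac:(sc) ltac:(sc))).
    unfold V in *. lra.
Qed.

Lemma QO_cont P Q e : bnd P -> bnd Q -> (forall x y, I01 x -> I01 y -> Rabs (P x y - Q x y) <= e) ->
  forall x y, I01 x -> I01 y -> QO Q x y - 5 * e <= QO P x y.
Proof.
  intros HP HQ He x y Hx Hy. unfold I01 in *.
  pose proof (Rabs_le_i _ _ (He x y ltac:(sc) ltac:(sc))).
  apply QO_ge; try assumption; try sc.
  - intros s1 t2 A1 A2. onw HQ Q x y s1 t2.
    pose proof (Rabs_le_i _ _ (He s1 t2 ltac:(sc) ltac:(sc))).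
    pose proof (Rabs_le_i _ _ (He s1 y ltac:(sc) ltac:(sc))).
    pose proof (Rabs_le_i _ _ (He x t2 ltac:(sc) ltac:(sc))).
    unfold V in *. lra.
  - intros s2 t1 A1 A2. ose HQ Q x y s2 t1.
    pose proof (Rabs_le_i _ _ (He s2 t1 ltac:(sc) ltac:(sc))).
    pose proof (Rabs_le_i _ _ (He s2 y ltac:(sc) ltac:(sc))).
    pose proof (Rabs_le_i _ _ (He x t1 ltac:(sc) ltac:(sc))).
    unfold V in *. lra.
Qed.


Theorem mainTheorem9 (A B : fn2) :
  imprecise_copula A B ->
  (* (a) monotonicity *)
  (forall n, le_sq (An A B n) (An A B (S n))) /\
  (forall n, le_sq (Bn A B (S n)) (Bn A B n)) /\
  (* (b) *)
  (forall n, (n >= 1)%nat ->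
     imprecise_copula (An A B n) (Bn A B n) /\
     le_sq (An A B (n - 1)) (An A B n) /\
     le_sq (An A B n) (Bn A B n) /\
     le_sq (Bn A B n) (Bn A B (n - 1))) /\
  (* (a) uniform convergence, and (c) *)
  exists Ab Bb : fn2,
    unif_cv (An A B) Ab /\ unif_cv (Bn A B) Bb /\
    imprecise_copula Ab Bb /\
    (forall n, le_sq (An A B n) Ab /\ le_sq Ab Bb /\ le_sq Bb (Bn A B n)) /\
    eq_sq (QM Ab) Bb /\ eq_sq (QO Bb) Ab.
Proof.
  intros IAB.
  assert (IC : forall n, imprecise_copula (An A B n) (Bn A B n)).
  { induction n as [|n IH]; [exact IAB|].
    change (An A B (S n)) with (QO (QM (An A B n))).
    change (Bn A B (S n)) with (QM (An A B n)).
    exact (proj1 (step _ _ IH)). }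
  assert (Ha : forall n, le_sq (An A B n) (An A B (S n))) by (intro n; exact (proj1 (proj2 (step _ _ (IC n))))).
  assert (Hb : forall n, le_sq (Bn A B (S n)) (Bn A B n)) by (intro n; exact (proj2 (proj2 (step _ _ (IC n))))).
  assert (bF : forall n, bnd (An A B n)) by (intro n; apply (ic_facts _ _ (IC n))).
  assert (bG : forall n, bnd (Bn A B n)) by (intro n; apply (ic_facts _ _ (IC n))).
  assert (lF : forall n, lip (An A B n)) by (intro n; apply qc_lip; apply (ic_facts _ _ (IC n))).
  assert (lG : forall n, lip (Bn A B n)) by (intro n; apply qc_lip; apply (ic_facts _ _ (IC n))).
  split; [exact Ha|split; [exact Hb|split]].
  { intros n Hn. destruct n as [|n]; [lia|]. replace (S n - 1)%nat with n by lia.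
    split; [apply IC|split; [apply Ha|split; [apply (ic_facts _ _ (IC (S n)))|apply Hb]]]. }
  assert (UF : unif_cv (An A B) (Asup (An A B))).
  { apply unif_grid; [exact lF|apply Asup_lip; assumption|apply Asup_cv; assumption]. }
  assert (UG : unif_cv (Bn A B) (Binf (Bn A B))).
  { apply unif_grid; [exact lG|apply Binf_lip; assumption|apply Binf_cv; assumption]. }
  assert (IL : imprecise_copula (Asup (An A B)) (Binf (Bn A B))) by (eapply lim_ic; eauto).
  destruct (ic_facts _ _ IL) as (bA & bB & _ & _ & LE).
  exists (Asup (An A B)), (Binf (Bn A B)).
  split; [exact UF|split; [exact UG|split; [exact IL|split; [|split]]]].
  - intro n. split; [|split; [exact LE|]].
    + intros x y Hx Hy. apply Asup_ge; assumption.
    + intros x y Hx Hy. apply Binf_le; assumption.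
  - intros x y Hx Hy.
    assert (forall w z : R, w - z = 0 -> w = z) as Hw by (intros; lra). apply Hw.
    apply zero_of. intros e He.
    destruct (UF (e/6) ltac:(lra)) as [N1 h1]. destruct (UG (e/6) ltac:(lra)) as [N2 h2].
    set (n := Nat.max N1 N2).
    assert (C1 : forall x y, I01 x -> I01 y -> Rabs (Asup (An A B) x y - An A B n x y) <= e/6).
    { intros a b Ha' Hb'. rewrite Rabs_minus_sym. left. apply h1; auto. unfold n; lia. }
    assert (C2 : forall x y, I01 x -> I01 y -> Rabs (An A B n x y - Asup (An A B) x y) <= e/6).
    { intros a b Ha' Hb'. left. apply h1; auto. unfold n; lia. }
    pose proof (QM_cont _ _ _ bA (bF n) C1 x y Hx Hy).
    pose proof (QM_cont _ _ _ (bF n) bA C2 x y Hx Hy).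
    assert (E : QM (An A B n) x y = Bn A B (S n) x y) by reflexivity.
    assert (h := h2 (S n) ltac:(unfold n; lia) x y Hx Hy). apply Rabs_def2 in h. lra.
  - intros x y Hx Hy.
    assert (forall w z : R, w - z = 0 -> w = z) as Hw by (intros; lra). apply Hw.
    apply zero_of. intros e He.
    destruct (UF (e/6) ltac:(lra)) as [N1 h1]. destruct (UG (e/6) ltac:(lra)) as [N2 h2].
    set (n := Nat.max N1 N2).
    assert (C1 : forall x y, I01 x -> I01 y -> Rabs (Binf (Bn A B) x y - Bn A B (S n) x y) <= e/6).
    { intros a b Ha' Hb'. rewrite Rabs_minus_sym. left. apply h2; auto. unfold n; lia. }
    assert (C2 : forall x y, I01 x -> I01 y -> Rabs (Bn A B (S n) x y - Binf (Bn A B) x y) <= e/6).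
    { intros a b Ha' Hb'. left. apply h2; auto. unfold n; lia. }
    pose proof (QO_cont _ _ _ bB (bG (S n)) C1 x y Hx Hy).
    pose proof (QO_cont _ _ _ (bG (S n)) bB C2 x y Hx Hy).
    assert (E : QO (Bn A B (S n)) x y = An A B (S n) x y) by reflexivity.
    assert (h := h1 (S n) ltac:(unfold n; lia) x y Hx Hy). apply Rabs_def2 in h. lra.
Qed.
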